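(* Let $G$ be a primitive permutation group on a finite set $\Omega$ with $n=|\Omega|>2$. Then: (a) $G$ synchronizes every map $f:\Omega\to\Omega$ of rank $n-2$; (b) $G$ synchronizes every idempotent map $f:\Omega\to\Omega$ with kernel type $(3,2,1,1,\ldots,1)$; (c) $G$ synchronizes every map $f:\Omega\to\Omega$ with kernel type $(3,2,1,1,\ldots,1)$ for which there exists $g\in G$ such that $\mathrm{rank}(fgf)=\mathrm{rank}(f)$.
   Context: Maps act on $\Omega$, and $fgf$ denotes the composite ''apply $f$, then $g$, then $f$''. The rank of $f$ is $|\Omega f|$, the size of its image. $G$ synchronizes a non-invertible map $f$ if the semigroup $\langle G,f\rangle$ contains a constant map. The kernel of $f$ is the partition of $\Omega$ into the inverse images of points of the image of $f$; the kernel type is the multiset of sizes of the kernel classes (so $(3,2,1,\ldots,1)$ means one class of size 3, one of size 2, all others singletons). A map $f$ is idempotent if $f\circ f=f$. *)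

(* Defs.v *)
From mathcomp Require Import all_boot all_fingroup all_solvable.
Set Implicit Arguments. Unset Strict Implicit. Unset Printing Implicit Defensive.

(* Maps act on Omega = T; composition "apply h1 then h2" is (h2 \o h1). *)

Inductive in_semigroup (T : finType) (G : {set {perm T}}) (f : T -> T)
  : (T -> T) -> Prop :=
| sg_perm (g : {perm T}) : g \in G -> in_semigroup G f (fun x => g x)
| sg_map : in_semigroup G f f
| sg_comp h1 h2 : in_semigroup G f h1 -> in_semigroup G f h2 ->
                  in_semigroup G f (h2 \o h1).

Definition is_constant_map (T : finType) (h : T -> T) : Prop :=
  exists c : T, forall x, h x = c.

Definition synchronizes (T : finType) (G : {set {perm T}}) (f : T -> T) : Prop :=
  exists h, in_semigroup G f h /\ is_constant_map h.

Definition map_rank (T : finType) (f : T -> T) : nat := #|[set f x | x : T]|.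

Definition kernel_type (T : finType) (f : T -> T) : seq nat :=
  [seq #|[set x | f x == y]| | y <- enum [set f x | x : T]].

Definition kernel_type_321 (T : finType) (f : T -> T) : Prop :=
  perm_eq (kernel_type f) [:: 3, 2 & nseq (#|T| - 5) 1].

Definition idempotent_map (T : finType) (f : T -> T) : Prop :=
  forall x, f (f x) = f x.

(* Main.v *)
Require Import Defs.
From mathcomp Require Import all_boot all_fingroup all_solvable.
From Stdlib Require Import ClassicalEpsilon Classical.
From mathcomp Require Import zify.
Set Implicit Arguments. Unset Strict Implicit. Unset Printing Implicit Defensive.

Definition pb (P : Prop) : bool := if excluded_middle_informative P then true else false.
Lemma pbP P : reflect P (pb P).
Proof. by rewrite /pb; case: excluded_middle_informative => h; constructor. Qed.

Lemma prim_univ (T : finType) (G : {group {perm T}}) (R : T -> T -> Prop) :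
  [primitive G, on [set: T] | 'P] ->
  (forall x, R x x) -> (forall x y, R x y -> R y x) ->
  (forall x y z, R x y -> R y z -> R x z) ->
  (forall g x y, g \in G -> R x y -> R (g x) (g y)) ->
  forall x y, x != y -> R x y -> forall a b, R a b.
Proof.
move=> primG Rr Rs Rt Ri x y nxy Rxy a b.
apply: NNPP => nRab.
pose e : rel T := fun u v => pb (R u v).
have eP u v : reflect (R u v) (e u v) by exact: pbP.
have eqe : {in [set: T] & &, equivalence_rel e}.
  move=> u v w _ _ _; split; first by apply/eP.
  move/eP=> Ruv; apply/idP/idP => /eP H; apply/eP; eauto.
pose Q := equivalence_partition e [set: T].
have cls u : [set v in [set: T] | e u v] \in Q by apply: imset_f.
case/andP: primG => _ /negP; apply; apply/existsP; exists Q.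
apply/and3P; split.
- exact: equivalence_partitionP.
- apply/actsP => g Gg X /=.
  have fw h X' : h \in G -> X' \in Q -> (('P^*)%act X' h \in Q).
    move=> Gh /imsetP[u _ ->]; rewrite /= /setact.
    have -> : [set ('P)%act v h | v in [set v in [set: T] | e u v]]
              = [set v in [set: T] | e (h u) v].
      apply/setP => v; rewrite !inE; apply/imsetP/idP.
        by case=> w; rewrite !inE => /eP Ruw ->; apply/eP; apply: Ri.
      move/eP => Rv; exists ((h^-1)%g v); last by rewrite /= apermE permKV.
      rewrite !inE; apply/eP.
      have := Ri _ _ _ (groupVr Gh) Rv.
      by rewrite -permM mulgV perm1.
    exact: cls.
  apply/idP/idP; last exact: fw.
  move=> H; have := fw _ _ (groupVr Gg) H.
  by rewrite /= -actM mulgV act1.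
- have clsE u v : ([set w in [set: T] | e u w] == [set w in [set: T] | e v w]) = e u v.
    apply/eqP/idP.
      move/setP/(_ v); rewrite !inE /= => ->; apply/eP; exact: Rr.
    move/eP=> Ruv; apply/setP => w; rewrite !inE; apply/eP/eP; eauto.
  apply/andP; split.
    apply/card_gt1P; exists [set w in [set: T] | e a w], [set w in [set: T] | e b w].
    split; rewrite ?cls //; rewrite clsE; by apply/eP.
  rewrite ltn_neqAle leq_imset_card andbT; apply/negP => /imset_injP inj.
  move/negP: nxy; apply; apply/eqP; apply: inj; rewrite ?inE //.
  by apply/eqP; rewrite clsE; apply/eP.
Qed.

Lemma chain (T : finType) (G : {group {perm T}}) (R : T -> T -> Prop) g x :
  (forall x, R x x) -> (forall x y z, R x y -> R y z -> R x z) ->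
  (forall g x y, g \in G -> R x y -> R (g x) (g y)) ->
  g \in G -> R (g x) x -> R x (g x).
Proof.
move=> Rr Rt Ri Gg Rgx.
have H i : R (((g ^+ i.+1)%g) x) (g x).
  elim: i => [|i IH]; first by rewrite expg1; apply: Rr.
  apply: Rt IH; have := Ri _ _ _ (groupX i.+1 Gg) Rgx.
  by rewrite -permM -expgS.
have := H (#[g]%g).-1; rewrite prednK ?order_gt0 // expg_order perm1 //.
Qed.

Lemma exists_min (P : nat -> Prop) n : P n -> exists m, P m /\ forall k, P k -> m <= k.
Proof.
elim: n {-2}n (leqnn n) => [|N IH] n hn Pn.
  by exists n; split => // k _; move: hn; rewrite leqn0 => /eqP ->.
case: (classic (exists k, k < n /\ P k)) => [[k [kn Pk]]|nk].
  by apply: (IH k) => //; rewrite -ltnS (leq_trans kn hn).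
exists n; split => // k Pk; rewrite leqNgt; apply/negP => kn; apply: nk; exists k; auto.
Qed.

Definition img (T : finType) (h : T -> T) : {set T} := [set h x | x : T].
Definition Mk (T : finType) (G : {set {perm T}}) f (h : T -> T) :=
  in_semigroup G f h /\ forall h', in_semigroup G f h' -> map_rank h <= map_rank h'.

Lemma img_compl (T : finType) (k s : T -> T) : img (k \o s) \subset img k.
Proof. by apply/subsetP => _ /imsetP[x _ ->]; apply: imset_f. Qed.

Lemma imset_comp' (T : finType) (k s : T -> T) :
  [set (s \o k) x | x : T] = s @: [set k x | x : T].
Proof.
apply/setP=> y; apply/imsetP/imsetP => [[x _ ->]|[_ /imsetP[x _ ->] ->]].
  by exists (k x); rewrite ?imset_f.
by exists x.
Qed.

Lemma rank_compr (T : finType) (k s : T -> T) : map_rank (s \o k) <= map_rank k.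
Proof. by rewrite /map_rank imset_comp' leq_imset_card. Qed.

Lemma Mk_r (T : finType) (G : {set {perm T}}) f k s :
  Mk G f k -> in_semigroup G f s -> Mk G f (k \o s).
Proof.
move=> [Sk mk] Ss; split; first exact: sg_comp.
move=> h' Sh'; apply: leq_trans (mk _ Sh'); exact: subset_leq_card (img_compl k s).
Qed.

Lemma Mk_l (T : finType) (G : {set {perm T}}) f k s :
  Mk G f k -> in_semigroup G f s -> Mk G f (s \o k).
Proof.
move=> [Sk mk] Ss; split; first exact: sg_comp.
move=> h' Sh'; apply: leq_trans (mk _ Sh'); exact: rank_compr.
Qed.

Lemma img_Mk (T : finType) (G : {set {perm T}}) f k s :
  Mk G f k -> in_semigroup G f s -> img (k \o s) = img k.
Proof.
move=> [Sk mk] Ss; apply/eqP; rewrite eqEcard img_compl /=.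
exact: (mk _ (sg_comp Ss Sk)).
Qed.

Lemma inj_Mk (T : finType) (G : {set {perm T}}) f k k' :
  Mk G f k -> Mk G f k' -> {in img k' &, injective k}.
Proof.
move=> Mkk [Sk' mk']; apply/imset_injP; rewrite eqn_leq leq_imset_card /=.
have := mk' _ (sg_comp Sk' (proj1 Mkk)).
by rewrite /map_rank imset_comp'.
Qed.

Definition cls (T : finType) (G : {set {perm T}}) f (B : {set T}) :=
  exists k w, Mk G f k /\ B = [set z | k z == k w].
Definition sct (T : finType) (G : {set {perm T}}) f (J : {set T}) :=
  exists k, Mk G f k /\ J = img k.

Lemma meet_ex (T : finType) (G : {set {perm T}}) f B J :
  cls G f B -> sct G f J -> exists z, z \in J /\ z \in B.
Proof.
move=> [k [w [Mkk ->]]] [k' [Mkk' ->]].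
have : k w \in img (k \o k') by rewrite (img_Mk Mkk (proj1 Mkk')) imset_f.
case/imsetP => v _ /= e; exists (k' v); by rewrite imset_f // inE e.
Qed.

Lemma meet_uniq (T : finType) (G : {set {perm T}}) f B J z1 z2 :
  cls G f B -> sct G f J -> z1 \in J -> z1 \in B -> z2 \in J -> z2 \in B -> z1 = z2.
Proof.
move=> [k [w [Mkk ->]]] [k' [Mkk' ->]] J1; rewrite inE => /eqP e1 J2; rewrite inE => /eqP e2.
by apply: (inj_Mk Mkk Mkk') => //; rewrite e1 e2.
Qed.

Lemma cls_pre (T : finType) (G : {set {perm T}}) f B s :
  cls G f B -> in_semigroup G f s -> cls G f [set z | s z \in B].
Proof.
move=> [k [w [Mkk ->]]] Ss.
have : k w \in img (k \o s) by rewrite (img_Mk Mkk Ss) imset_f.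
case/imsetP => v _ /= e; exists (k \o s), v; split; first exact: Mk_r.
by apply/setP => z; rewrite !inE /= e.
Qed.

Lemma sct_pre (T : finType) (G : {group {perm T}}) f J g :
  sct G f J -> g \in G -> exists J', sct G f J' /\ forall x, (x \in J') = (g x \in J).
Proof.
move=> [k [Mkk ->]] Gg.
exists (img ((fun z => (g^-1)%g z) \o k)); split.
  by exists ((fun z => (g^-1)%g z) \o k); split => //; apply: Mk_l => //; apply: sg_perm; rewrite groupV.
move=> x; apply/imsetP/imsetP => [[v _ /= ->]|[v _ e]].
  by exists v; rewrite // permKV.
by exists v => //=; rewrite -e permK.
Qed.

Lemma key (T : finType) (G : {group {perm T}}) f k :
  [primitive G, on [set: T] | 'P] -> ~ synchronizes G f -> in_semigroup G f k ->
  forall x0 y0, x0 != y0 -> k x0 = k y0 -> #|T| <= map_rank k + 3 -> False.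
Proof.
move=> primG nsync Sk x0 y0 nxy kxy hrk.
case/andP: (primG) => trG _.
have trans x y : exists2 g, g \in G & y = g x.
  by have [g Gg ->] := atransP2 trG (in_setT x) (in_setT y); exists g.
have [m [[h0 [Sh0 rh0]] hmin]] :=
  exists_min (P := fun n => exists h, in_semigroup G f h /\ map_rank h = n)
             (ex_intro _ k (conj Sk erefl)).
have Mh0 : Mk G f h0.
  by split => // h' Sh'; rewrite rh0; apply: hmin; exists h'.
have [z0 hz0] : exists z, h0 z <> h0 x0.
  apply: NNPP => H; apply: nsync; exists h0; split => //; exists (h0 x0) => z.
  by apply: NNPP => H'; apply: H; exists z.
have rkk_lt : map_rank k < #|T|.
  rewrite ltn_neqAle max_card andbT; apply/negP => /eqP e.
  have : {in T &, injective k} by apply/imset_injP; move: e; rewrite /map_rank => ->.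
  by move=> inj; move/negP: nxy; apply; apply/eqP; apply: inj.
have rh0_lt : map_rank h0 < #|T| := leq_ltn_trans (proj2 Mh0 _ Sk) rkk_lt.
pose co x y := forall B, cls G f B -> (x \in B) = (y \in B).
pose se x y := forall J, sct G f J -> (x \in J) = (y \in J).
pose pre x y := forall J, sct G f J -> x \in J -> y \in J.
have se_univ : (forall a b, se a b) -> False.
  move=> H.
  have e : img h0 = setT.
    apply/setP => z; rewrite inE -(H (h0 x0) z (img h0) (ex_intro _ h0 (conj Mh0 erefl))).
    exact: imset_f.
  by move: rh0_lt; rewrite /map_rank; change [set h0 x | x : T] with (img h0); rewrite e cardsT ltnn.
have co_univ : (forall a b, co a b) -> False.
  move=> H; apply: hz0.
  have cB : cls G f [set z | h0 z == h0 x0] by exists h0, x0.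
  by have := H x0 z0 _ cB; rewrite !inE eqxx => /esym /eqP.
have cover y : exists J, sct G f J /\ y \in J.
  have [g Gg ->] := trans (h0 x0) y.
  exists (img ((fun z => g z) \o h0)); split; last by apply: imset_f.
  by exists ((fun z => g z) \o h0); split => //; apply: Mk_l => //; apply: sg_perm.
pose Fs := [set B : {set T} | pb (cls G f B)].
pose Phi (B : {set T}) := [set z | k z \in B].
case: (classic {in Fs &, injective Phi}) => [injPhi | ninj].
  have sub : Phi @: Fs \subset Fs.
    apply/subsetP => _ /imsetP[B FB ->]; rewrite inE; apply/pbP; apply: cls_pre => //.
    by move: FB; rewrite inE => /pbP.
  have eqF : Phi @: Fs = Fs.
    apply/eqP; rewrite eqEcard sub /=.
    by rewrite (card_in_imset injPhi).
  have cxy : co x0 y0.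
    move=> B cB; have : B \in Phi @: Fs by rewrite eqF inE; apply/pbP.
    by case/imsetP => B' _ ->; rewrite !inE kxy.
  apply: co_univ; apply: (prim_univ primG _ _ _ _ nxy cxy).
  - by move=> x B _.
  - by move=> x y H B cB; rewrite H.
  - by move=> x y z H1 H2 B cB; rewrite H1 ?H2.
  - move=> g x y Gg H B cB.
    have := H _ (cls_pre cB (sg_perm f Gg)); by rewrite !inE.
have [B [B' [cB [cB' [ePhi nBB']]]]] :
    exists B B', cls G f B /\ cls G f B' /\ Phi B = Phi B' /\ B <> B'.
  apply: NNPP => H; apply: ninj => B B' FB FB' e; apply: NNPP => ne; apply: H.
  rewrite !inE in FB FB'; move/pbP: FB => FB; move/pbP: FB' => FB'.
  by exists B, B'.
have agree z : z \in img k -> (z \in B) = (z \in B').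
  case/imsetP => v _ ->; have := congr1 (fun X : {set T} => v \in X) ePhi; by rewrite !inE.
have subl : forall B B' x y, cls G f B -> cls G f B' -> x \in B -> x \notin B' ->
    (forall w, w \in B -> w \notin B' -> w = x) -> y \in B' -> y \notin B -> False.
  move=> B1 B2 x y c1 c2 xB1 xB2 hx yB2 yB1.
  have pyx : pre y x.
    move=> J sJ yJ; have [w [wJ wB1]] := meet_ex c1 sJ.
    case: (boolP (w \in B2)) => wB2.
      have e := meet_uniq c2 sJ wJ wB2 yJ yB2.
      by move: yB1; rewrite -e wB1.
    by rewrite -(hx w wB1 wB2).
  have [g Gg ey] := trans x y.
  have prer : forall x, pre x x by move=> ? ? ?.
  have pret : forall x y z, pre x y -> pre y z -> pre x z.
    by move=> ? ? ? H1 H2 J sJ h; apply: H2 => //; apply: H1.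
  have prei : forall g x y, g \in G -> pre x y -> pre (g x) (g y).
    move=> g' x' y' Gg' H J sJ; have [J' [sJ' eJ]] := sct_pre sJ Gg'.
    by rewrite -!eJ; apply: H.
  have pxy : pre x y.
    rewrite ey; apply: (chain prer pret prei Gg); by rewrite -ey.
  have nxy' : x != y by apply: contraNneq yB1 => <-.
  apply: se_univ; apply: (prim_univ primG _ _ _ _ nxy').
  - by move=> ? ? ?.
  - by move=> ? ? H J sJ; rewrite H.
  - by move=> ? ? ? H1 H2 J sJ; rewrite H1 ?H2.
  - move=> g' x' y' Gg' H J sJ; have [J' [sJ' eJ]] := sct_pre sJ Gg'.
    by rewrite -!eJ; apply: H.
  - by move=> J sJ; apply/idP/idP; [apply: pxy | apply: pyx].
have nel : forall B B' x, cls G f B -> cls G f B' -> x \in B -> x \notin B' ->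
    exists y, y \in B' /\ y \notin B.
  move=> B1 B2 x c1 c2 xB1 xB2; have [J [sJ xJ]] := cover x.
  have [y [yJ yB2]] := meet_ex c2 sJ; exists y; split => //; apply/negP => yB1.
  by move: xB2; rewrite (meet_uniq c1 sJ xJ xB1 yJ yB1) yB2.
have [z hz] : exists z, (z \in B) != (z \in B').
  apply: NNPP => H; apply: nBB'; apply/setP => z; apply/eqP; apply: NNPP => H2.
  by apply: H; exists z; apply/negP => e; exact: H2 e.
have [x1 [y1 [x1B x1B' y1B' y1B]]] :
    exists x y, [/\ x \in B, x \notin B', y \in B' & y \notin B].
  case zB: (z \in B) hz => /= hz.
    have zB' : z \notin B' by move: hz; case: (z \in B').
    have [y [? ?]] := nel _ _ _ cB cB' zB zB'.
    by exists z, y.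
  have zB' : z \in B' by move: hz; case: (z \in B').
  have [y [? ?]] := nel _ _ _ cB' cB zB' (negbT zB).
  by exists y, z; rewrite zB.
pose D1 := B :\: B'. pose D2 := B' :\: B.
have D1U : D1 \subset ~: img k.
  apply/subsetP => w; rewrite !inE => /andP[wB' wB]; apply/negP => wk.
  by move: wB'; rewrite -(agree w wk) wB.
have D2U : D2 \subset ~: img k.
  apply/subsetP => w; rewrite !inE => /andP[wB wB']; apply/negP => wk.
  by move: wB; rewrite (agree w wk) wB'.
have D12 : D1 :&: D2 = set0.
  apply/setP => w; rewrite !inE; by case: (w \in B); case: (w \in B').
have hcard : #|D1| + #|D2| <= 3.
  rewrite -cardsUI D12 cards0 addn0.
  apply: leq_trans (subset_leq_card (_ : D1 :|: D2 \subset ~: img k)) _.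
    by rewrite subUset D1U D2U.
  have := cardsC (img k); move: hrk; rewrite /map_rank; change [set k x | x : T] with (img k).
  move=> h1 h2; lia.
have x1D1 : x1 \in D1 by rewrite inE x1B x1B'.
have y1D2 : y1 \in D2 by rewrite inE y1B y1B'.
have c1 : 0 < #|D1| by apply/card_gt0P; exists x1.
have c2 : 0 < #|D2| by apply/card_gt0P; exists y1.
have [le1|le2] : #|D1| <= 1 \/ #|D2| <= 1.
  by case: (leqP #|D1| 1) => h; [left | right; move: hcard h c2; clear; lia].
  apply: (subl B B' x1 y1) => // w wB wB'.
  have wD1 : w \in D1 by rewrite inE wB wB'.
  exact: (card_le1_eqP le1).
apply: (subl B' B y1 x1) => // w wB' wB.
have wD2 : w \in D2 by rewrite inE wB wB'.
exact: (card_le1_eqP le2).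
Qed.

Lemma noninj (T : finType) (f : T -> T) : map_rank f < #|T| -> exists x y, x != y /\ f x = f y.
Proof.
move=> h; apply: NNPP => H; move: h; rewrite /map_rank.
have inj : {in T &, injective f}.
  move=> x y _ _ e; apply: NNPP => ne; apply: H; exists x, y; split => //.
  by apply/eqP => e'; apply: ne.
by rewrite (card_in_imset inj) ltnn.
Qed.

Lemma sync_of (T : finType) (G : {group {perm T}}) f :
  [primitive G, on [set: T] | 'P] -> map_rank f < #|T| -> #|T| <= map_rank f + 3 ->
  synchronizes G f.
Proof.
move=> primG h1 h2; apply: NNPP => ns.
have [x [y [nxy e]]] := noninj h1.
exact: (key primG ns (sg_map G f) nxy e h2).
Qed.

Lemma rank321 (T : finType) (f : T -> T) : kernel_type_321 f -> map_rank f = (#|T| - 5).+2.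
Proof.
move/perm_size; rewrite /kernel_type size_map -cardE /= size_nseq.
by [].
Qed.

Theorem theorem3 (T : finType) (G : {group {perm T}}) :
  [primitive G, on [set: T] | 'P] -> 2 < #|T| ->
  (forall f : T -> T, map_rank f = #|T| - 2 -> synchronizes G f) /\
  (forall f : T -> T, idempotent_map f -> kernel_type_321 f ->
     synchronizes G f) /\
  (forall f : T -> T, kernel_type_321 f ->
     (exists2 g : {perm T}, g \in G & map_rank (f \o g \o f) = map_rank f) ->
     synchronizes G f).
Proof.
move=> primG hn; split; [|split].
- move=> f hf; apply: sync_of => //; rewrite hf; lia.
- move=> f _ /rank321 hf; apply: sync_of => //; rewrite hf; lia.
- move=> f /rank321 hf _; apply: sync_of => //; rewrite hf; lia.
Qed.
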